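(* Let $G=(V,E)$ be a tree on $n$ vertices, $\alpha\in(0,1)$, $\bm q$ a probability distribution on $V$, and $v\in V$ with $d_v=|\Gamma(v)|$. Let $W=V\setminus(\Gamma(v)\cup\{v\})$, and define $F(\bm x,\bm y)$ for $\bm x\in\{0,1\}^{\Gamma(v)}\setminus\{\bm 0\}$, $\bm y\in\{0,1\}^{W}$ as below. Fix an ordering of $W$ in which $e_u$ is nonincreasing (ties broken arbitrarily) and for $0\le m\le |W|$ let $\hat{\bm y}^{m}\in\{0,1\}^W$ be the indicator vector of the first $m$ elements in this ordering. Then for every $l$ with $1\le l\le n-1$, $$\max\{F(\bm x,\bm y): \bm 1^T\bm x+\bm 1^T\bm y=l\}=\max\{F(\bm x,\hat{\bm y}^{l_2}): \bm 1^T\bm x=l_1,\ 1\le l_1\le d_v,\ 0\le l_2\le |W|,\ l_1+l_2=l\},$$ where both maxima are over the feasible $\bm x\neq\bm 0$ (and $\bm y$) satisfying the stated constraints.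
   Context: Potentials: $\phi_{uv}$ is the probability that an $\alpha$-random walk on the tree (at each step, with probability $\alpha$ it jumps, otherwise moves to a uniformly random neighbour) started at $u$ visits $v$ before its first jump; $\phi_{vv}=1$ and $\phi_{uv}=\frac{1-\alpha}{|\Gamma(u)|}\sum_{w\in\Gamma(u)}\phi_{wv}$ for $u\ne v$, with $\Gamma(u)$ the neighbour set. Root the tree at $v$; for $i\in\Gamma(v)$ let $N_i$ be the vertex set of the subtree rooted at $i$ (including $i$); every $u\in W$ lies in $N_i\setminus\{i\}$ for exactly one $i\in\Gamma(v)$. Constants: $a_i=\alpha\sum_{u\in N_i}q_u\phi_{uv}$ and $c_i=(1-\alpha)\phi_{iv}$ for $i\in\Gamma(v)$; $e_u=(1-\alpha)\phi_{uv}$ for $u\in W$. The function (the PageRank of $v$ in the request-delete-model when $v$ keeps the edges to $\{i:x_i=1\}$ and adds outgoing arcs to $\{u:y_u=1\}$) is $$F(\bm x,\bm y)=(\bm 1^T\bm x+\bm 1^T\bm y)\,\frac{\sum_{i\in\Gamma(v)}a_ix_i}{\sum_{i\in\Gamma(v)}\Big((1-c_i)x_i+\sum_{u\in N_i\setminus\{i\}}(1-e_ux_i)\,y_u\Big)}.$$ *)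

(* Defs.v *)
From HB Require Import structures.
From mathcomp Require Import all_boot all_order all_algebra.
Set Implicit Arguments. Unset Strict Implicit. Unset Printing Implicit Defensive.
Import Order.TTheory GRing.Theory Num.Theory.
Local Open Scope ring_scope.

Definition nbhd (T : finType) (adj : rel T) (u : T) : {set T} := [set w | adj u w].

(* A tree: simple (symmetric, irreflexive), connected, with |E| = n - 1
   (ordered adjacent pairs count each edge twice). *)
Definition is_tree (T : finType) (adj : rel T) : Prop :=
  [/\ symmetric adj, irreflexive adj, (forall u w, connect adj u w) &
      #|[set p : T * T | adj p.1 p.2]| = (2 * (#|T| - 1))%N].

Definition Wset (T : finType) (adj : rel T) (v : T) : {set T} :=
  ~: (v |: nbhd adj v).

(* N_i: vertex set of the subtree rooted at i when the tree is rooted at v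
   (vertices reachable from i without passing through v). *)
Definition subtree (T : finType) (adj : rel T) (v i : T) : {set T} :=
  [set u | connect [rel a b | [&& adj a b, a != v & b != v]] i u].

Section F.
Variables (R : realFieldType) (T : finType) (adj : rel T) (alpha : R)
  (q : T -> R) (phi : T -> T -> R) (v : T).

Definition a_const (i : T) : R :=
  alpha * \sum_(u in subtree adj v i) q u * phi u v.
Definition c_const (i : T) : R := (1 - alpha) * phi i v.
Definition e_const (u : T) : R := (1 - alpha) * phi u v.

Definition b2R (b : bool) : R := (nat_of_bool b)%:R.

(* F(x, y); x is meant to be supported on Gamma(v), y on W. *)
Definition Fval (x y : T -> bool) : R :=
  ((#|[set u | x u]| + #|[set u | y u]|)%N)%:R *
  ((\sum_(i in nbhd adj v) a_const i * b2R (x i)) /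
   (\sum_(i in nbhd adj v)
      ((1 - c_const i) * b2R (x i) +
       \sum_(u in subtree adj v i :\ i) (1 - e_const u * b2R (x i)) * b2R (y u)))).
End F.

Definition yhat (T : eqType) (s : seq T) (m : nat) : T -> bool :=
  fun u => u \in take m s.

Definition is_max_of (X : Type) (R : realFieldType) (P : X -> Prop) (f : X -> R) (m : R) : Prop :=
  (exists z, P z /\ f z = m) /\ (forall z, P z -> f z <= m).

(* Main.v *)
Require Import Defs.
From HB Require Import structures.
From mathcomp Require Import all_boot all_order all_algebra.
From mathcomp Require Import lra zify.
From Stdlib Require Import FunctionalExtensionality.
Import Order.TTheory GRing.Theory Num.Theory.
Set Implicit Arguments. Unset Strict Implicit. Unset Printing Implicit Defensive.
Local Open Scope ring_scope.

Section Edges.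
Variables (T : finType) (e : rel T) (r : T).
Hypothesis esym : symmetric e.
Hypothesis econ : forall u, connect e r u.

Definition reach (n : nat) : {set T} :=
  iter n (fun S => S :|: [set y | [exists x in S, e x y]]) [set r].

Lemma reach_path p : forall x m, path e x p -> x \in reach m ->
  last x p \in reach (m + size p).
Proof.
elim: p => [|y p IH] x m /=; first by rewrite addn0.
move=> /andP[exy pp] xm.
have ym : y \in reach m.+1.
  rewrite /= in_setU; apply/orP; right; rewrite in_set; apply/existsP.
  by exists x; rewrite xm exy.
by rewrite -addSnnS; apply: IH.
Qed.

Lemma exU u : exists n, u \in reach n.
Proof.
have /connectP[p pp ->] := econ u.
exists (0 + size p)%N; apply: reach_path => //.
by rewrite /= set11.
Qed.

Definition dist u := ex_minn (exU u).

Lemma dist_in u : u \in reach (dist u).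
Proof. by rewrite /dist; case: ex_minnP. Qed.

Lemma dist_min u n : u \in reach n -> (dist u <= n)%N.
Proof. by rewrite /dist; case: ex_minnP => m _ H /H. Qed.

Lemma parent_ex u : u != r -> exists x, e x u && (dist x < dist u)%N.
Proof.
move=> ur.
have := dist_in u; case E: (dist u) => [|k].
  by rewrite /= in_set1 (negbTE ur).
rewrite /= in_setU => /orP[H|].
  by have := dist_min H; rewrite E ltnn.
rewrite in_set => /existsP[x /andP[xk exu]].
by exists x; rewrite exu ltnS dist_min.
Qed.

Definition par u := odflt r [pick x | e x u && (dist x < dist u)%N].

Lemma par_spec u : u != r -> e (par u) u && (dist (par u) < dist u)%N.
Proof.
move=> ur; rewrite /par; case: pickP => [x -> //|H].
by have [x] := parent_ex ur; rewrite H.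
Qed.

Lemma edges_lb : (2 * (#|T| - 1) <= #|[set p : T * T | e p.1 p.2]|)%N.
Proof.
set A := [set~ r].
set S1 := [set (u, par u) | u in A].
set S2 := [set (par u, u) | u in A].
have c1 : #|S1| = #|A|.
  by apply: card_imset => a b [].
have c2 : #|S2| = #|A|.
  by apply: card_imset => a b [].
have dj : [disjoint S1 & S2].
  rewrite disjoint_subset; apply/subsetP => p /imsetP[u uA ->]; rewrite inE.
  apply/negP => /imsetP[w wA [e1 e2]].
  move: uA wA; rewrite !in_setC1 => uA wA.
  have /andP[_ h1] := par_spec uA.
  have /andP[_ h2] := par_spec wA.
  rewrite -e1 in h2; rewrite e2 in h1.
  by have := ltn_trans h1 h2; rewrite ltnn.
have := (leq_card_setU S1 S2).2; rewrite dj => /eqP cU.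
have sub : S1 :|: S2 \subset [set p : T * T | e p.1 p.2].
  apply/subsetP => p; rewrite in_setU => /orP[] /imsetP[u uA ->];
  move: uA; rewrite in_setC1 => uA; have /andP[h _] := par_spec uA;
  by rewrite in_set //= esym.
have := subset_leq_card sub; rewrite cU c1 c2 cardsC1.
by rewrite mul2n -addnn subn1.
Qed.

End Edges.

Definition avoid (T : finType) (adj : rel T) (v : T) : rel T :=
  [rel a b | [&& adj a b, a != v & b != v]].

Lemma in_subtree (T : finType) (adj : rel T) (v i u : T) :
  (u \in subtree adj v i) = connect (avoid adj v) i u.
Proof. by rewrite /subtree inE. Qed.

Section Tree.
Variables (T : finType) (adj : rel T) (v : T).
Hypothesis tree : is_tree adj.

Let adj_sym : symmetric adj. Proof. by case: tree. Qed.
Let adj_irr : irreflexive adj. Proof. by case: tree. Qed.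
Let adj_con : forall u w, connect adj u w. Proof. by case: tree. Qed.
Let adj_card : #|[set p : T * T | adj p.1 p.2]| = (2 * (#|T| - 1))%N.
Proof. by case: tree. Qed.

Local Notation av := (avoid adj v).

Lemma avoid_sym : symmetric av.
Proof.
move=> a b; rewrite /avoid /= adj_sym.
by case: (adj b a); case: (a != v); case: (b != v).
Qed.

Lemma nocycle i j : adj v i -> adj v j -> connect av i j -> i = j.
Proof.
move=> vi vj cij; apply/eqP/negPn/negP => ij.
pose e' := [rel a b | adj a b && ~~((a == v) && (b == j)) && ~~((a == j) && (b == v))].
have vj' : v != j by apply/negP => /eqP E; rewrite -E adj_irr in vj.
have vi' : v != i by apply/negP => /eqP E; rewrite -E adj_irr in vi.
have esym : symmetric e'.
  move=> a b /=; rewrite [adj b a]adj_sym.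
  by case: (adj a b); case: (a==v); case: (a==j); case: (b==v); case: (b==j).
have avsub : subrel av e'.
  move=> a b; rewrite /avoid /= => /and3P[-> av bv]; rewrite (negbTE av) (negbTE bv) /=.
  by rewrite !andbF.
have cij' : connect e' i j by apply: connect_sub cij => a b H; apply: connect1; apply: avsub.
have cji' : connect e' j i by rewrite (sym_connect_sym esym).
have sub : subrel adj (connect e').
  move=> a b ab.
  case E1: ((a == v) && (b == j)).
    move/andP: E1 => [/eqP -> /eqP ->].
    apply: connect_trans cij'; apply: connect1.
    by rewrite /= vi eqxx /= (negbTE ij) /= (eq_sym i v) (negbTE vi') andbF.
  case E2: ((a == j) && (b == v)).
    move/andP: E2 => [/eqP -> /eqP ->].
    apply: connect_trans cji' _; apply: connect1.
    rewrite /= adj_sym vi /= (eq_sym i v) (negbTE vi') /=.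
    by rewrite (negbTE ij).
  by apply: connect1; rewrite /= ab E1 E2.
have econ : forall u, connect e' v u.
  by move=> u; exact: (connect_sub sub (adj_con v u)).
have lb := edges_lb esym econ.
have Eq : [set p : T * T | e' p.1 p.2] =
          [set p : T * T | adj p.1 p.2] :\ (v, j) :\ (j, v).
  apply/setP => [[a b]]; rewrite !inE /= !xpair_eqE.
  by case: (adj a b); case: (a==v); case: (a==j); case: (b==v); case: (b==j).
have c1 := cardsD1 (v, j) [set p : T * T | adj p.1 p.2].
have c2 := cardsD1 (j, v) ([set p : T * T | adj p.1 p.2] :\ (v, j)).
move: c1 c2 lb; rewrite Eq adj_card !inE /= vj adj_sym vj xpair_eqE.
rewrite (eq_sym j v) (negbTE vj') /=.
move=> -> ->; rewrite -Eq.
set k := #|_|.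
lia.
Qed.

Lemma path_avoid p x : path av x p -> all (fun b => b != v) p.
Proof.
elim: p x => [|y p IH] x //= /andP[/and3P[_ _ yv] pp].
by rewrite yv (IH y).
Qed.

Lemma v_notin_sub i : adj v i -> ~~ connect av i v.
Proof.
move=> vi; apply/negP => /connectP[p pp vl].
have := mem_last i p; rewrite -vl inE => /orP[/eqP E|].
  by rewrite -E adj_irr in vi.
by move: (path_avoid pp) => /allP H /H; rewrite eqxx.
Qed.

Lemma path_nb p : forall u, u != v -> path adj u p -> v \in p ->
  exists2 i, adj v i & connect av i u.
Proof.
elim: p => [|z p IH] u uv //= /andP[uz pp].
rewrite inE => /orP[/eqP E|vp].
  by exists u; [rewrite adj_sym E | exact: connect0].
case zv: (z == v).
  by exists u; [rewrite adj_sym -(eqP zv) | exact: connect0].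
have [i vi ciz] := IH z (negbT zv) pp vp.
exists i => //; apply: connect_trans ciz _; apply: connect1.
by rewrite /avoid /= adj_sym uz zv uv.
Qed.

Lemma exists_nb u : u != v -> exists2 i, adj v i & connect av i u.
Proof.
move=> uv; have /connectP[p pp vl] := adj_con u v.
apply: (path_nb uv pp).
have := mem_last u p; rewrite -vl inE => /orP[/eqP E|//].
by rewrite E eqxx in uv.
Qed.

Lemma sub_W i u : adj v i -> connect av i u -> u != i -> u \in Wset adj v.
Proof.
move=> vi ciu ui; rewrite /Wset !inE negb_or; apply/andP; split.
  by apply/negP => /eqP E; move: ciu; rewrite E; apply/negP; apply: v_notin_sub.
apply/negP => vu.
have E : u = i by apply: (nocycle vu vi); rewrite (sym_connect_sym avoid_sym).
by rewrite E eqxx in ui.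
Qed.

Lemma uniq_nb i j u : adj v i -> adj v j -> connect av i u -> connect av j u -> i = j.
Proof.
move=> vi vj ciu cju; apply: nocycle => //; apply: connect_trans ciu _.
by rewrite (sym_connect_sym avoid_sym).
Qed.

Definition iota u := odflt v [pick i | adj v i && connect av i u && (u != i)].

Lemma iota_spec u : u \in Wset adj v ->
  [/\ adj v (iota u), connect av (iota u) u & u != iota u].
Proof.
move=> uW; rewrite /iota; case: pickP => [i /andP[/andP[]]|H] //.
have uv : u != v by move: uW; rewrite /Wset !inE negb_or => /andP[].
have [i vi ciu] := exists_nb uv.
have ui : u != i.
  apply/negP => /eqP E; move: uW; rewrite /Wset !inE negb_or E vi.
  by rewrite andbF.
by have := H i; rewrite vi ciu ui.
Qed.

Lemma iota_uniq i u : adj v i -> connect av i u -> u != i -> i = iota u.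
Proof.
move=> vi ciu ui; have uW := sub_W vi ciu ui.
have [h1 h2 _] := iota_spec uW.
exact: uniq_nb vi h1 ciu h2.
Qed.

Lemma nb_exists : (1 < #|T|)%N -> exists i, adj v i.
Proof.
move=> /card_gt1P[a [b [_ _ ab]]].
have [u uv] : exists u, u != v.
  case av': (a == v); last by exists a; rewrite av'.
  by exists b; rewrite -(eqP av') eq_sym.
by have [i vi _] := exists_nb uv; exists i.
Qed.

End Tree.

Section Phi.
Variables (R : realFieldType) (T : finType) (adj : rel T) (alpha : R)
  (phi : T -> T -> R) (v : T).
Hypothesis tree : is_tree adj.
Hypothesis ha : 0 < alpha < 1.
Hypothesis hvv : phi v v = 1.
Hypothesis hrec : forall u, u != v ->
  phi u v = (1 - alpha) / (#|nbhd adj u|%:R) * \sum_(z in nbhd adj u) phi z v.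

Let a0 : 0 < alpha. Proof. by case/andP: ha. Qed.
Let a1 : alpha < 1. Proof. by case/andP: ha. Qed.

Lemma phi_up u M : u != v -> (forall z, z \in nbhd adj u -> phi z v <= M) ->
  0 <= M -> phi u v <= (1 - alpha) * M.
Proof.
move=> uv H M0; rewrite hrec //.
have b1 : 0 <= 1 - alpha by have := a1; lra.
have hs : \sum_(z in nbhd adj u) phi z v <= #|nbhd adj u|%:R * M.
  by rewrite mulr_natl -sumr_const; apply: ler_sum.
case: (posnP #|nbhd adj u|) => [->|dp].
  by rewrite invr0 mulr0 mul0r; apply: mulr_ge0.
apply: le_trans (ler_wpM2l _ hs) _; first by apply: divr_ge0.
rewrite -mulrA [_^-1 * _]mulrA mulVf ?mul1r // pnatr_eq0 -lt0n //.
Qed.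

Lemma phi_lo u m : u != v -> (forall z, z \in nbhd adj u -> m <= phi z v) ->
  m <= 0 -> (1 - alpha) * m <= phi u v.
Proof.
move=> uv H M0; rewrite hrec //.
have b1 : 0 <= 1 - alpha by have := a1; lra.
have hs : #|nbhd adj u|%:R * m <= \sum_(z in nbhd adj u) phi z v.
  by rewrite mulr_natl -sumr_const; apply: ler_sum.
case: (posnP #|nbhd adj u|) => [->|dp].
  by rewrite invr0 mulr0 mul0r; apply: mulr_ge0_le0.
apply: le_trans _ (ler_wpM2l _ hs); last by apply: divr_ge0.
rewrite -mulrA [_^-1 * _]mulrA mulVf ?mul1r // pnatr_eq0 -lt0n //.
Qed.

Lemma phi_ge0 u : 0 <= phi u v.
Proof.
have [u0 _ Hmin] := arg_minP (fun w => phi w v) (isT : xpredT v).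
apply: le_trans (Hmin u isT); rewrite leNgt; apply/negP => neg.
have u0v : u0 != v by apply/negP => /eqP E; move: neg; rewrite E hvv ltr10.
have := phi_lo u0v (fun z _ => Hmin z isT) (ltW neg).
have := a0; have := a1; nra.
Qed.

Lemma phi_le1 u : phi u v <= 1.
Proof.
have [u0 _ Hmax] := arg_maxP (fun w => phi w v) (isT : xpredT v).
apply: le_trans (Hmax u isT) _; rewrite leNgt; apply/negP => neg.
have u0v : u0 != v by apply/negP => /eqP E; move: neg; rewrite E hvv ltxx.
have := phi_up u0v (fun z _ => Hmax z isT) (le_trans ler01 (ltW neg)).
have := a0; have := a1; nra.
Qed.

Lemma phi_sub i u : adj v i -> connect (avoid adj v) i u -> phi u v <= phi i v.
Proof.
move=> vi ciu.
have [u0 c0 Hmax] := arg_maxP (fun w => phi w v) (connect0 (avoid adj v) i : (fun w => connect (avoid adj v) i w) i).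
apply: le_trans (Hmax u ciu) _; rewrite leNgt; apply/negP => neg.
have u0i : u0 != i by apply/negP => /eqP E; move: neg; rewrite E ltxx.
have u0v : u0 != v.
  by apply/negP => /eqP E; move: c0; rewrite E; apply/negP; apply: v_notin_sub.
have u0W := sub_W tree vi c0 u0i.
have H : forall z, z \in nbhd adj u0 -> phi z v <= phi u0 v.
  move=> z; rewrite inE => u0z; apply: Hmax; apply: connect_trans c0 _.
  apply: connect1; rewrite /avoid /= u0z u0v /=.
  apply/negP => /eqP E; move: u0W; rewrite /Wset !inE negb_or => /andP[_].
  by case: tree => s _ _ _; rewrite s -E u0z.
have := phi_up u0v H (phi_ge0 u0).
have := phi_ge0 i.
have := a0; have := a1; nra.
Qed.

End Phi.

Lemma b2R1 (R : realFieldType) : b2R R true = 1.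
Proof. by rewrite /b2R /=. Qed.
Lemma b2R0 (R : realFieldType) : b2R R false = 0.
Proof. by rewrite /b2R /=. Qed.

Lemma sorted_take_drop (X : eqType) (e : rel X) (s : seq X) k a b :
  transitive e -> sorted e s -> a \in take k s -> b \in drop k s -> e a b.
Proof.
move=> tr; elim: s k => [|x s IH] [|k] //=.
rewrite inE => ps /orP[/eqP ->|ak] bd.
  by have /allP := order_path_min tr ps; apply; apply: mem_drop bd.
by apply: IH ak bd; apply: path_sorted ps.
Qed.

Section Main.
Variables (R : realFieldType) (T : finType) (adj : rel T) (alpha : R)
  (q : T -> R) (phi : T -> T -> R) (v : T) (s : seq T).
Hypothesis tree : is_tree adj.
Hypothesis ha : 0 < alpha < 1.
Hypothesis hq : forall u, 0 <= q u.
Hypothesis hvv : phi v v = 1.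
Hypothesis hrec : forall u, u != v ->
  phi u v = (1 - alpha) / (#|nbhd adj u|%:R) * \sum_(z in nbhd adj u) phi z v.

Local Notation G := (nbhd adj v).
Local Notation W := (Wset adj v).
Local Notation a := (a_const adj alpha q phi v).
Local Notation c := (c_const alpha phi v).
Local Notation e := (e_const alpha phi v).
Local Notation io := (iota adj v).

Let a0 : 0 < alpha. Proof. by case/andP: ha. Qed.
Let a1 : alpha < 1. Proof. by case/andP: ha. Qed.

Definition FF (X Y : {set T}) := Fval adj alpha q phi v (fun u => u \in X) (fun u => u \in Y).
Definition Nf (X : {set T}) := \sum_(i in X) a i.
Definition Df (X Y : {set T}) := \sum_(i in X) (1 - c i) +
  \sum_(u in Y) (1 - e u * b2R R (io u \in X)).

Lemma cardX (X : {set T}) : #|[set u | u \in X]| = #|X|.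
Proof. by apply: eq_card => u; rewrite inE. Qed.

Lemma sum_b2R (A X : {set T}) (f : T -> R) : X \subset A ->
  \sum_(i in A) f i * b2R R (i \in X) = \sum_(i in X) f i.
Proof.
move=> sub; rewrite [RHS]big_mkcond [LHS]big_mkcond; apply: eq_bigr => i _.
case iX: (i \in X); case iA: (i \in A); rewrite ?b2R1 ?b2R0 ?mulr1 ?mulr0 //.
by rewrite (subsetP sub) in iA.
Qed.

Lemma FF_eq (X Y : {set T}) : X \subset G -> Y \subset W ->
  FF X Y = (#|X| + #|Y|)%:R * (Nf X / Df X Y).
Proof.
move=> sX sY; rewrite /FF /Fval !cardX; congr (_ * (_ / _)).
  exact: sum_b2R.
rewrite big_split /= sum_b2R //; congr (_ + _).
under eq_bigr => i _ do rewrite big_mkcond /=.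
rewrite exchange_big /= [RHS]big_mkcond; apply: eq_bigr => u _.
case uY: (u \in Y); last first.
  by apply: big1 => i _; case: ifP => // _; rewrite b2R0 mulr0.
have uW : u \in W by apply: (subsetP sY).
have [h1 h2 h3] := iota_spec tree uW.
rewrite (bigD1 (io u)) /=; last by rewrite inE.
rewrite in_setD1 in_subtree h2 h3 /= b2R1 mulr1 big1 ?addr0 //.
move=> i /andP[iG iio]; case: ifP => //; rewrite in_setD1 in_subtree => /andP[ui ciu].
by rewrite -(iota_uniq tree _ ciu ui) ?eqxx in iio; rewrite inE in iG.
Qed.

Lemma phi01 u : 0 <= phi u v <= 1.
Proof. by rewrite (phi_ge0 ha hvv hrec) (phi_le1 ha hvv hrec). Qed.

Lemma e_ge0 u : 0 <= e u.
Proof. by rewrite /e_const; apply: mulr_ge0; [have := a1; lra | case/andP: (phi01 u)]. Qed.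

Lemma e_lt1 u : e u <= 1 - alpha.
Proof. rewrite /e_const; case/andP: (phi01 u) => h1 h2. have := a1; nra. Qed.

Lemma a_ge0 i : 0 <= a i.
Proof.
rewrite /a_const; apply: mulr_ge0; first exact: ltW.
by apply: sumr_ge0 => u _; apply: mulr_ge0 => //; case/andP: (phi01 u).
Qed.

Lemma Nf_ge0 (X : {set T}) : 0 <= Nf X.
Proof. by apply: sumr_ge0 => i _; apply: a_ge0. Qed.

Lemma b2R_ge0 b : 0 <= b2R R b. Proof. by case: b; rewrite ?b2R1 ?b2R0. Qed.
Lemma b2R_le1 b : b2R R b <= 1. Proof. by case: b; rewrite ?b2R1 ?b2R0. Qed.

Lemma Df_pos (X Y : {set T}) : (exists i, i \in X) -> 0 < Df X Y.
Proof.
move=> [i iX]; rewrite /Df (bigD1 i) //=.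
have h1 : 0 < 1 - c i by have := e_lt1 i; rewrite /e_const /c_const; have := a0; lra.
have h2 : 0 <= \sum_(j in X | j != i) (1 - c j).
  by apply: sumr_ge0 => j _; have := e_lt1 j; rewrite /e_const /c_const; have := a0; lra.
have h3 : 0 <= \sum_(u in Y) (1 - e u * b2R R (io u \in X)).
  apply: sumr_ge0 => u _; have := e_lt1 u; have := e_ge0 u.
  have := b2R_ge0 (io u \in X); have := b2R_le1 (io u \in X); have := a0; nra.
lra.
Qed.

Lemma F_le (X Y X' Y' : {set T}) : X \subset G -> X' \subset G -> Y \subset W -> Y' \subset W ->
  (exists i, i \in X) -> (exists i, i \in X') ->
  (#|X| + #|Y| = #|X'| + #|Y'|)%N -> Nf X <= Nf X' -> Df X' Y' <= Df X Y ->
  FF X Y <= FF X' Y'.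
Proof.
move=> sX sX' sY sY' nX nX' card hN hD.
rewrite !FF_eq // card; apply: ler_wpM2l => //.
have D0 := Df_pos Y nX; have D0' := Df_pos Y' nX'; have N0 := Nf_ge0 X.
rewrite ler_pdivlMr // mulrAC ler_pdivrMr //; nra.
Qed.


Hypothesis hperm : perm_eq s (enum W).
Hypothesis hsort : sorted (fun a b => e b <= e a) s.

Definition P m : {set T} := [set u | u \in take m s].

Lemma s_uniq : uniq s. Proof. by rewrite (perm_uniq hperm) enum_uniq. Qed.
Lemma s_size : size s = #|W|. Proof. by rewrite (perm_size hperm) -cardE. Qed.
Lemma P_sub m : P m \subset W.
Proof.
apply/subsetP => u; rewrite inE => /mem_take.
by rewrite (perm_mem hperm) mem_enum.
Qed.
Lemma P_card m : (m <= #|W|)%N -> #|P m| = m.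
Proof.
move=> mW; rewrite /P cardsE.
have /card_uniqP -> := take_uniq m s_uniq.
by rewrite size_takel // s_size.
Qed.

Lemma exch k : forall d (X Y : {set T}), #|Y| = k -> #|Y :\: P k| = d ->
  X \subset G -> (exists i, i \in X) -> Y \subset W ->
  exists (X' : {set T}) m, [/\ X' \subset G, (exists i, i \in X'), (m <= #|W|)%N,
    (#|X'| + m = #|X| + #|Y|)%N & FF X Y <= FF X' (P m)].
Proof.
elim/ltn_ind: k => k IHk d.
elim/ltn_ind: d => d IHd X Y Yk Yd sX nX sY.
have kW : (k <= #|W|)%N by rewrite -Yk; apply: subset_leq_card.
have Pk := P_card kW.
case: (posnP d) => [d0|dp].
  have YP : Y \subset P k.
    move: Yd; rewrite d0 => /cards0_eq /setP H; apply/subsetP => u uY.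
    by have := H u; rewrite !inE uY andbT => /negbFE.
  have E : Y = P k by apply/eqP; rewrite eqEcard YP Pk Yk leqnn.
  by exists X, k; split => //; [rewrite Yk | rewrite E lexx].
have [w wD] : exists w, w \in Y :\: P k by apply/set0Pn; rewrite -card_gt0 Yd.
have PYd : #|P k :\: Y| = d by rewrite cardsD setIC -Yd cardsD Pk Yk.
have [u uD] : exists u, u \in P k :\: Y by apply/set0Pn; rewrite -card_gt0 PYd.
have wD' := wD.
move: wD uD; rewrite !in_setD => /andP[wP wY] /andP[uY uP].
have wW : w \in W := subsetP sY w wY.
have uW : u \in W := subsetP (P_sub k) u uP.
have ewu : e w <= e u.
  apply: (@sorted_take_drop _ (fun a b => e b <= e a) s k) hsort _ _.
  - by move=> x y z h1 h2 /=; exact: le_trans h2 h1.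
  - by rewrite inE in uP.
  have : w \in take k s ++ drop k s by rewrite cat_take_drop (perm_mem hperm) mem_enum.
  rewrite mem_cat => /orP[H|//].
  by rewrite inE H in wP.
have [h1 h2 h3] := iota_spec tree uW.
have eu_ci : e u <= c (io u).
  rewrite /e_const /c_const; apply: ler_wpM2l; first by have := a1; lra.
  exact: (phi_sub tree ha hvv hrec h1 h2).
have cY : #|Y| = (#|Y :\ w|).+1 by rewrite (cardsD1 w Y) wY.
case iX: (io u \in X).
  set Y' := u |: (Y :\ w).
  have uY' : u \notin Y :\ w by rewrite in_setD1 (negbTE uY) andbF.
  have cY' : #|Y'| = k by rewrite cardsU1 uY' -Yk cY.
  have dY' : #|Y' :\: P k| = d.-1.
    have -> : Y' :\: P k = (Y :\: P k) :\ w.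
      apply/setP => z; rewrite !inE.
      case: (eqVneq z u) => [->|zu] /=; last by rewrite andbCA.
      have uP' : (u \in take k s) = true by rewrite inE in uP.
      by rewrite uP' /= andbF.
    by move: Yd; rewrite (cardsD1 w (Y :\: P k)) wD' add1n => <-.
  have sY' : Y' \subset W.
    apply/subsetP => z; rewrite /Y' in_setU1 in_setD1 => /orP[/eqP->//|/andP[_ zY]].
    exact: (subsetP sY).
  have dlt : (d.-1 < d)%N by rewrite ltn_predL.
  have [X' [m [H1 H2 H3 H4 H5]]] := IHd d.-1 dlt X Y' cY' dY' sX nX sY'.
  exists X'; exists m; split => //; first by rewrite H4 cY' Yk.
  apply: le_trans H5; apply: F_le => //; first by rewrite cY' Yk.
  rewrite /Df (big_setU1 _ uY') (big_setD1 w wY) /= iX b2R1.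
  have := b2R_le1 (io w \in X); have := b2R_ge0 (io w \in X); have := e_ge0 w.
  nra.
have iG : io u \in G by rewrite inE.
have sX' : io u |: X \subset G.
  by apply/subsetP => z; rewrite in_setU1 => /orP[/eqP->//|]; exact: (subsetP sX).
have nX' : exists i, i \in io u |: X by exists (io u); rewrite setU11.
have sY' : Y :\ w \subset W.
  by apply/subsetP => z; rewrite in_setD1 => /andP[_ ?]; exact: (subsetP sY).
have klt : (k.-1 < k)%N by rewrite ltn_predL -Yk cY.
have cY' : #|Y :\ w| = k.-1 by rewrite -Yk cY.
have [X'' [m [H1 H2 H3 H4 H5]]] := IHk k.-1 klt _ (io u |: X) (Y :\ w) cY' erefl sX' nX' sY'.
exists X''; exists m; split => //.
  by rewrite H4 cardsU1 iX cY /= add1n addSn addnS.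
apply: le_trans H5; apply: F_le => //.
- by rewrite cardsU1 iX cY /= add1n addSn addnS.
- by rewrite /Nf (big_setU1 _ (negbT iX)) /=; have := a_ge0 (io u); lra.
rewrite /Df (big_setU1 _ (negbT iX)) (big_setD1 w wY) /=.
have hs : \sum_(z in Y :\ w) (1 - e z * b2R R (io z \in io u |: X)) <=
          \sum_(z in Y :\ w) (1 - e z * b2R R (io z \in X)).
  apply: ler_sum => z _; rewrite in_setU1.
  case: (io z \in X); case: (io z == io u); rewrite ?orbT ?orbF ?b2R1 ?b2R0;
  have := e_ge0 z; lra.
have := b2R_le1 (io w \in X); have := b2R_ge0 (io w \in X); have := e_ge0 w.
nra.
Qed.


Lemma main_result (l : nat) : (1 <= l <= #|T| - 1)%N ->
  exists m : R,
    is_max_of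
      (fun p : (T -> bool) * (T -> bool) =>
         [/\ forall u, p.1 u -> u \in nbhd adj v,
             forall u, p.2 u -> u \in Wset adj v,
             exists u, p.1 u &
             (#|[set u | p.1 u]| + #|[set u | p.2 u]|)%N = l])
      (fun p => Fval adj alpha q phi v p.1 p.2) m /\
    is_max_of
      (fun p : (T -> bool) * nat =>
         [/\ forall u, p.1 u -> u \in nbhd adj v,
             (1 <= #|[set u | p.1 u]| <= #|nbhd adj v|)%N,
             (p.2 <= #|Wset adj v|)%N &
             (#|[set u | p.1 u]| + p.2)%N = l])
      (fun p => Fval adj alpha q phi v p.1 (yhat s p.2)) m.
Proof.
move=> /andP[l1 l2].
have vG : v \notin G by case: tree => _ irr _ _; rewrite inE irr.
have cT : #|T| = (1 + #|G| + #|W|)%N by rewrite -(cardsC (v |: G)) cardsU1 vG.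
have Gpos : (0 < #|G|)%N.
  have h1T : (1 < #|T|)%N by lia.
  have [i vi] := nb_exists v tree h1T.
  by rewrite card_gt0; apply/set0Pn; exists i; rewrite inE.
pose l1' := minn l #|G|.
pose m0 := (l - l1')%N.
have m0W : (m0 <= #|W|)%N by rewrite /m0 /l1'; lia.
pose X0 := [set u | u \in take l1' (enum G)].
have X0G : X0 \subset G.
  by apply/subsetP => u; rewrite inE => /mem_take; rewrite mem_enum.
have cX0 : #|X0| = l1'.
  rewrite cardsE; have /card_uniqP -> := take_uniq l1' (enum_uniq (mem G)).
  by rewrite size_takel // -cardE /l1' geq_minr.
pose PP : pred ({set T} * 'I_(#|W|.+1)) := fun p =>
  [&& p.1 \subset G, (0 < #|p.1|)%N, (#|p.1| <= #|G|)%N & (#|p.1| + p.2 == l)%N].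
pose Gf (p : {set T} * 'I_(#|W|.+1)) :=
  Fval adj alpha q phi v (fun u => u \in p.1) (yhat s p.2).
have PP0 : PP (X0, inord m0).
  rewrite /PP /= X0G cX0 inordK; last by rewrite ltnS.
  by rewrite /m0 /l1'; apply/and3P; split; [lia | lia | apply/eqP; lia].
have [[Xs ms] Ps Hmax] := arg_maxP Gf PP0.
have yP m : (fun u => u \in P m) = yhat s m.
  by apply: functional_extensionality => u; rewrite inE.
move/and4P: Ps => [/= sXs cXs1 cXs2 /eqP cXs].
have msW : (ms <= #|W|)%N by rewrite -ltnS ltn_ord.
exists (Gf (Xs, ms)); split; split.
- exists ((fun u => u \in Xs), yhat s ms); split; last by []; split => /=.
  + by move=> u; apply: (subsetP sXs).
  + by move=> u uy; apply: (subsetP (P_sub ms)); rewrite inE.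
  + by have /card_gt0P := cXs1.
  + have -> : [set u | yhat s ms u] = P ms by apply/setP => u; rewrite !inE.
    by rewrite cardX P_card.
- move=> [x y] /= [hx hy [u0 xu0] cxy].
  pose X := [set u | x u]; pose Y := [set u | y u].
  have sX : X \subset G by apply/subsetP => u; rewrite inE; apply: hx.
  have sY : Y \subset W by apply/subsetP => u; rewrite inE; apply: hy.
  have nX : exists i, i \in X by exists u0; rewrite inE.
  have [X' [m [H1 H2 H3 H4 H5]]] := exch (erefl #|Y|) (erefl _) sX nX sY.
  have Fxy : Fval adj alpha q phi v x y = FF X Y.
    rewrite /FF; congr Fval; apply: functional_extensionality => u; by rewrite inE.
  rewrite Fxy; apply: le_trans H5 _.
  have mlt : (m < #|W|.+1)%N by rewrite ltnS.
  have -> : FF X' (P m) = Gf (X', inord m) by rewrite /FF yP /Gf /= inordK.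
  apply: Hmax; rewrite /PP /= H1 inordK // subset_leq_card //.
  rewrite H4 -cxy; have /card_gt0P ->: exists i, i \in X' by [].
  by rewrite /X /Y eqxx.
- exists ((fun u => u \in Xs), nat_of_ord ms); split; last by []; split => /=.
  + by move=> u; apply: (subsetP sXs).
  + by rewrite cardX cXs1 cXs2.
  + exact: msW.
  + by rewrite cardX.
- move=> [x m] /= [hx /andP[c1 c2] mW cxm].
  pose X := [set u | x u].
  have mlt : (m < #|W|.+1)%N by rewrite ltnS.
  have -> : Fval adj alpha q phi v x (yhat s m) = Gf (X, inord m).
    rewrite /Gf /= inordK //; congr Fval; apply: functional_extensionality => u; by rewrite inE.
  apply: Hmax; rewrite /PP /= inordK // c1 c2 cxm eqxx !andbT.
  by apply/subsetP => u; rewrite inE; apply: hx.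
Qed.

End Main.

Unset Implicit Arguments.
Set Strict Implicit.

Theorem lemma4p3 (R : realFieldType) (T : finType) (adj : rel T) (alpha : R)
    (q : T -> R) (phi : T -> T -> R) (v : T) (s : seq T) (l : nat) :
  is_tree adj ->
  0 < alpha < 1 ->
  (forall u, 0 <= q u) -> \sum_u q u = 1 ->
  (forall w, phi w w = 1) ->
  (forall u w, u != w ->
     phi u w = (1 - alpha) / (#|nbhd adj u|%:R) * \sum_(z in nbhd adj u) phi z w) ->
  perm_eq s (enum (Wset adj v)) ->
  sorted (fun a b => e_const alpha phi v b <= e_const alpha phi v a) s ->
  (1 <= l <= #|T| - 1)%N ->
  exists m : R,
    is_max_of
      (fun p : (T -> bool) * (T -> bool) =>
         [/\ forall u, p.1 u -> u \in nbhd adj v,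
             forall u, p.2 u -> u \in Wset adj v,
             exists u, p.1 u &
             (#|[set u | p.1 u]| + #|[set u | p.2 u]|)%N = l])
      (fun p => Fval adj alpha q phi v p.1 p.2) m /\
    is_max_of
      (fun p : (T -> bool) * nat =>
         [/\ forall u, p.1 u -> u \in nbhd adj v,
             (1 <= #|[set u | p.1 u]| <= #|nbhd adj v|)%N,
             (p.2 <= #|Wset adj v|)%N &
             (#|[set u | p.1 u]| + p.2)%N = l])
      (fun p => Fval adj alpha q phi v p.1 (yhat s p.2)) m.
Proof.
move=> tr ha hq _ hvv hrec' hperm hsort hl.
have hrec : forall u, u != v ->
  phi u v = (1 - alpha) / (#|nbhd adj u|%:R) * \sum_(z in nbhd adj u) phi z v.
  by move=> u uv; apply: hrec'.
exact: (main_result tr ha hq (hvv v) hrec hperm hsort hl).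
Qed.
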